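(* Let $\Gamma=(\Gamma^\alpha)_{\alpha\in\{0,1\}^k}$ be a vector of complex numbers indexed by $\{0,1\}^k$ such that for all $\alpha,\beta\in\{0,1\}^k$, writing $p_1<\cdots<p_l$ for the positions where $\alpha$ and $\beta$ differ, \[ \sum_{i=1}^{l}(-1)^{i}\,\Gamma^{\alpha\oplus e_{p_i}}\,\Gamma^{\beta\oplus e_{p_i}}=0 . \] Then $\Gamma$ satisfies the Parity Condition: either $\Gamma^\alpha=0$ for all $\alpha$ of odd Hamming weight, or $\Gamma^\alpha=0$ for all $\alpha$ of even Hamming weight.
   Context: $\oplus$ denotes bitwise XOR and $e_j\in\{0,1\}^k$ is the string with a $1$ in position $j$ and $0$ elsewhere. *)

(* Defs.v *)
From HB Require Import structures.
From mathcomp Require Import all_boot all_order all_algebra.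
From mathcomp Require Import complex.
From mathcomp Require Import Rstruct.
Set Implicit Arguments. Unset Strict Implicit. Unset Printing Implicit Defensive.
Import Order.TTheory GRing.Theory Num.Theory.
Local Open Scope ring_scope.

Definition CC := complex Rdefinitions.R.

Definition bstr (k : nat) := {ffun 'I_k -> bool}.

(* alpha (+) e_j : flip bit j (j a 0-based position, j < k). *)
Definition flip (k : nat) (a : bstr k) (j : 'I_k) : bstr k :=
  [ffun i => if i == j then ~~ a i else a i].

Definition diffpos (k : nat) (a b : bstr k) : seq 'I_k :=
  [seq i <- enum 'I_k | a i != b i].

Definition hweight (k : nat) (a : bstr k) : nat := #|[set i | a i]|.

Definition relation_sum (k : nat) (G : bstr k -> CC) (a b : bstr k) : CC :=
  let s := diffpos a b in
  \sum_(i < size s)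
    (-1) ^+ i.+1 * (G (flip a (tnth (in_tuple s) i)) * G (flip b (tnth (in_tuple s) i))).

Definition parity_condition (k : nat) (G : bstr k -> CC) : Prop :=
  (forall a : bstr k, odd (hweight a) -> G a = 0) \/
  (forall a : bstr k, ~~ odd (hweight a) -> G a = 0).

(* Main.v *)
Require Import Defs.
From HB Require Import structures.
From mathcomp Require Import all_boot all_order all_algebra complex Rstruct.
From mathcomp Require Import ring lra zify.
Import GRing.Theory Num.Theory.
Local Open Scope ring_scope.

Lemma hw k (a : bstr k) : hweight a = count (fun i => a i) (enum 'I_k).
Proof. rewrite /hweight cardsE cardE /enum_mem size_filter -enumT.
rewrite (@eq_filter _ _ predT) ?filter_predT //. Qed.

Lemma odd_count_diff (T : eqType) (a b : T -> bool) (s : seq T) :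
  odd (count (fun i => a i != b i) s) = odd (count a s) (+) odd (count b s).
Proof.
elim: s => [|x s IH] //=; rewrite !oddD IH; by case: (a x); case: (b x); case: (odd (count a s)); case: (odd (count b s)).
Qed.

Lemma flipK k (a : bstr k) p : flip (flip a p) p = a.
Proof. apply/ffunP => i; rewrite !ffunE; case: eqP => //; by rewrite negbK. Qed.

Lemma flipC k (a : bstr k) p q : flip (flip a p) q = flip (flip a q) p.
Proof. apply/ffunP => i; rewrite !ffunE; by case: eqP; case: eqP. Qed.

Lemma keyL k : forall n (P : 'I_n -> 'I_k) (e : 'I_n -> nat) (m : int) (h : bstr k -> CC),
 (forall a, (2 * m+1 - n%:Z)%:~R * h a + \sum_(i<n) (-1)^+ e i * h (flip a (P i)) = 0) ->
 forall a, h a = 0.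
Proof.
elim=> [|n IH] P e m h Hh a.
  have := Hh a; rewrite big_ord0 addr0 => /eqP; rewrite mulf_eq0 intr_eq0.
  case/orP => [/eqP|/eqP //]; lia.
pose p := P ord_max. pose eps : CC := (-1)^+ e ord_max.
pose P' := fun i : 'I_n => P (widen_ord (leqnSn n) i).
pose e' := fun i : 'I_n => e (widen_ord (leqnSn n) i).
pose c : CC := (2 * m+1 - n.+1%:Z)%:~R.
pose hp := fun a => h a + h (flip a p).
pose hm := fun a => h a - h (flip a p).
have E : forall a, c * h a + \sum_(i<n) (-1)^+ e' i * h (flip a (P' i)) + eps * h (flip a p) = 0.
  by move=> b; rewrite -addrA; have := Hh b; rewrite big_ord_recr /=.
have Hp : forall a, (c + eps) * hp a + \sum_(i<n) (-1)^+ e' i * hp (flip a (P' i)) = 0.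
  move=> b; have E1 := E b; have E2 := E (flip b p); rewrite flipK in E2.
  rewrite /hp; under eq_bigr => i _ do rewrite mulrDr.
  rewrite big_split /=. have -> : \sum_(i<n) (-1)^+ e' i * h (flip (flip b (P' i)) p) = \sum_(i<n) (-1)^+ e' i * h (flip (flip b p) (P' i)) by apply: eq_bigr => i _; rewrite flipC. have E3 := congr2 +%R E1 E2; rewrite addr0 in E3; apply: (etrans _ E3); ring.
have Hm : forall a, (c - eps) * hm a + \sum_(i<n) (-1)^+ e' i * hm (flip a (P' i)) = 0.
  move=> b; have E1 := E b; have E2 := E (flip b p); rewrite flipK in E2.
  rewrite /hm; under eq_bigr => i _ do rewrite mulrBr.
  rewrite sumrB /=. have -> : \sum_(i<n) (-1)^+ e' i * h (flip (flip b (P' i)) p) = \sum_(i<n) (-1)^+ e' i * h (flip (flip b p) (P' i)) by apply: eq_bigr => i _; rewrite flipC. have E3 := congr2 (fun x y => x - y) E1 E2; rewrite /= subr0 in E3; apply: (etrans _ E3); ring.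
have cP : c + 1 = (2 * m+1 - n%:Z)%:~R.
  by rewrite /c -[1 in LHS]/((1:int)%:~R) -intrD; congr intmul; lia.
have cM : c - 1 = (2 * (m-1)+1 - n%:Z)%:~R.
  by rewrite /c -[1 in LHS]/((1:int)%:~R) -intrB; congr intmul; lia.
have [hp0 hm0] : hp a = 0 /\ hm a = 0.
  have : eps = 1 \/ eps = -1.
    rewrite /eps -signr_odd; case: (odd _); [right|left]; by rewrite ?expr1 ?expr0.
  case=> Heps; rewrite Heps in Hp Hm.
    split; [apply: (IH P' e' m) => b | apply: (IH P' e' (m-1)) => b].
      by rewrite -cP; apply: Hp.
    by rewrite -cM; apply: Hm.
  split; [apply: (IH P' e' (m-1)) => b | apply: (IH P' e' m) => b].
    by rewrite -cM; apply: Hp.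
  by rewrite -cP -[X in c + X]opprK; apply: Hm.
have : h a *+ 2 = 0 by rewrite mulr2n; have E3 := congr2 +%R hp0 hm0; rewrite addr0 in E3; apply: (etrans _ E3); rewrite /hp /hm; ring.
by move/eqP; rewrite mulrn_eq0 /= => /eqP.
Qed.

Lemma odd_dist_zero k (G : bstr k -> CC) :
  (forall a b : bstr k, relation_sum G a b = 0) ->
  forall al be : bstr k, odd (size (diffpos al be)) -> G al * G be = 0.
Proof.
move=> HG al be Hodd.
set D := diffpos al be in Hodd.
have memD : forall i, (i \in D) = (al i != be i).
  by move=> i; rewrite mem_filter mem_enum andbT.
pose fl (a : bstr k) : bstr k := [ffun i => if i \in D then ~~ a i else a i].
have flal : fl al = be.
  apply/ffunP => i; rewrite ffunE memD; by case: (al i); case: (be i).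
have flflip : forall a p, fl (flip a p) = flip (fl a) p.
  move=> a p; apply/ffunP => i; rewrite !ffunE; by case: (i \in D); case: eqP.
have dfl : forall a, diffpos a (fl a) = D.
  move=> a; rewrite /diffpos /D /diffpos; apply: eq_filter => i.
  rewrite ffunE -memD; case: (i \in D) => //=; by case: (a i).
pose h a := G a * G (fl a).
have coef : (2 * ((size D)./2)%:Z + 1 - (size D)%:Z = 0 :> int).
  have := odd_double_half (size D); rewrite Hodd -muln2; lia.
rewrite -flal; apply: (@keyL k (size D) (fun i => tnth (in_tuple D) i)
  (fun i : 'I_(size D) => i.+1) ((size D)./2)%:Z h) => a.
rewrite coef mul0r add0r.
have := HG a (fl a); rewrite /relation_sum /= dfl => E; apply: etrans E.
apply: eq_bigr => i _; by rewrite /h flflip.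
Qed.

Theorem theorem2 (k : nat) (G : bstr k -> CC) :
  (forall a b : bstr k, relation_sum G a b = 0) -> parity_condition G.
Proof.
move=> HG.
have par : forall a b : bstr k, odd (size (diffpos a b)) = odd (hweight a) (+) odd (hweight b).
  by move=> a b; rewrite /diffpos size_filter !hw odd_count_diff.
case: (boolP [exists a : bstr k, odd (hweight a) && (G a != 0)]).
  case/existsP => a0 /andP[oa0 Ga0]; right => b ob.
  have := @odd_dist_zero k G HG a0 b; rewrite par oa0 (negbTE ob) => /(_ isT) /eqP.
  by rewrite mulf_eq0 (negbTE Ga0) => /eqP.
move=> Hn; left => a oa; apply/eqP; apply: contraNT Hn => Ga.
by apply/existsP; exists a; rewrite oa.
Qed.
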